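(* Let $C:\mathbb{R}^n\to\mathbb{R}$ be convex, increasing and $\mathbf 1$-invariant with $C(\vec 0)>0$. Then for every $\vec q\in\mathbb{R}^n_{>0}$ there exists a unique $\alpha>0$ with $C(-\vec q/\alpha)=0$; hence $\varphi:\mathbb{R}^n_{>0}\to\mathbb{R}$, $\varphi(\vec q)=$ this $\alpha$, is well-defined.
   Context: $\mathbf 1=(1,\dots,1)$. $C$ is $\mathbf 1$-invariant if $C(\vec q+\alpha\mathbf 1)=C(\vec q)+\alpha$ for all $\vec q,\alpha$; increasing if $C(\vec q)>C(\vec q')$ whenever $\vec q\succeq\vec q'$ coordinatewise and $\vec q\neq\vec q'$. $\mathbb{R}^n_{>0}$ is the set of vectors with all coordinates strictly positive. *)

(* Defs.v *)
From mathcomp Require Import all_boot all_order all_algebra.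
From mathcomp Require Import reals.
Set Implicit Arguments. Unset Strict Implicit. Unset Printing Implicit Defensive.
Import Order.TTheory GRing.Theory Num.Theory.
Local Open Scope ring_scope.

Definition ones (R : realType) (n : nat) : 'rV[R]_n := const_mx 1.

Definition convex_fun (R : realType) (n : nat) (C : 'rV[R]_n -> R) : Prop :=
  forall (x y : 'rV[R]_n) (t : R), 0 <= t -> t <= 1 ->
    C (t *: x + (1 - t) *: y) <= t * C x + (1 - t) * C y.

Definition one_invariant (R : realType) (n : nat) (C : 'rV[R]_n -> R) : Prop :=
  forall (q : 'rV[R]_n) (a : R), C (q + a *: ones R n) = C q + a.

Definition vge (R : realType) (n : nat) (q q' : 'rV[R]_n) : Prop :=
  forall i : 'I_n, q' 0 i <= q 0 i.

Definition increasing (R : realType) (n : nat) (C : 'rV[R]_n -> R) : Prop :=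
  forall q q' : 'rV[R]_n, vge q q' -> q <> q' -> C q' < C q.

Definition pos_vec (R : realType) (n : nat) (q : 'rV[R]_n) : Prop :=
  forall i : 'I_n, 0 < q 0 i.

(* Main.v *)
Require Import Defs.
From mathcomp Require Import all_boot all_order all_algebra.
From mathcomp Require Import reals.
From mathcomp Require Import lra.
From mathcomp Require Import classical_sets.
Import Order.TTheory GRing.Theory Num.Theory.
Local Open Scope ring_scope.

Section Aux.
Variables (R : realType) (n : nat) (C : 'rV[R]_n -> R).

Lemma mono_le : increasing C -> forall x y, vge x y -> C y <= C x.
Proof.
move=> hI x y hxy; case: (eqVneq x y) => [->//|/eqP hne].
exact/ltW/hI.
Qed.

Lemma term_le_sum (F : 'I_n -> R) i : (forall j, 0 <= F j) -> F i <= \sum_j F j.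
Proof.
move=> h; rewrite (bigD1 i) //= lerDl; exact: sumr_ge0.
Qed.

Lemma shift_bounds (q : 'rV[R]_n) (m M t s : R) :
  increasing C -> one_invariant C ->
  (forall i, m <= q 0 i <= M) -> t <= s ->
  C (- (t *: q)) - (s - t) * M <= C (- (s *: q)) <= C (- (t *: q)) - (s - t) * m.
Proof.
move=> hI hO hq hts; have hst : 0 <= s - t by rewrite subr_ge0.
apply/andP; split.
- rewrite -(hO _ (- ((s - t) * M))) addrC -mulNr.
  apply: mono_le => // i. rewrite !mxE mulr1.
  have /andP[_ h] := hq i.
  have : (s - t) * q 0 i <= (s - t) * M by rewrite ler_wpM2l.
  rewrite mulrBl; lra.
- rewrite -(hO _ (- ((s - t) * m))) addrC -mulNr.
  apply: mono_le => // i. rewrite !mxE mulr1.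
  have /andP[h _] := hq i.
  have : (s - t) * m <= (s - t) * q 0 i by rewrite ler_wpM2l.
  rewrite mulrBl; lra.
Qed.

End Aux.
Theorem lemma4p3 (R : realType) (n : nat) (C : 'rV[R]_n -> R) :
  convex_fun C -> increasing C -> one_invariant C -> 0 < C 0 ->
  forall q : 'rV[R]_n, pos_vec q ->
    exists! alpha : R, 0 < alpha /\ C (- (alpha^-1 *: q)) = 0.
Proof.
move=> _ hI hO hC0 q hq.
case: n => [|n'] in C hI hO hC0 q hq *.
  exfalso; have := hO 0 1; have -> : (0 + 1 *: ones R 0 : 'rV[R]_0) = 0 by apply/matrixP => i [] [].
  move=> h; lra.
set m := (\sum_i (q 0 i)^-1)^-1.
set M := \sum_i q 0 i.
have hM : 0 < M.
  apply: (lt_le_trans (hq ord0)); apply: term_le_sum => j; exact/ltW/hq.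
have hS : 0 < \sum_i (q 0 i)^-1.
  apply: (lt_le_trans (_ : 0 < (q 0 ord0)^-1)); first by rewrite invr_gt0.
  apply: term_le_sum => j; rewrite invr_ge0; exact/ltW/hq.
have hm : 0 < m by rewrite invr_gt0.
have hb : forall i, m <= q 0 i <= M.
  move=> i; apply/andP; split; last by apply: term_le_sum => j; exact/ltW/hq.
  rewrite -[q 0 i]invrK lef_pV2 ?posrE ?invr_gt0 //.
  apply: term_le_sum => j; rewrite invr_ge0; exact/ltW/hq.
pose g t := C (- (t *: q)).
have g0 : g 0 = C 0 by rewrite /g scale0r oppr0.
have hSB : forall t s, t <= s -> g t - (s - t) * M <= g s <= g t - (s - t) * m.
  move=> t s; exact: shift_bounds.
have strict : forall t s, t < s -> g s < g t.
  move=> t s ts; apply: hI.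
    move=> i; rewrite !mxE lerN2 ler_pM2r //; exact: ltW.
  move=> /(congr1 (fun A : 'rV_ _ => A 0 ord0)); rewrite !mxE => /oppr_inj /eqP.
  by rewrite (inj_eq (mulIf _)) ?(gt_eqF (hq _)) // => /eqP h; move: ts; rewrite h ltxx.
pose E : set R := fun t => 0 <= t /\ 0 <= g t.
have ubE : forall t, E t -> t <= C 0 / m.
  move=> t [t0 gt0]; rewrite ler_pdivlMr //.
  have /andP[_ h] := hSB 0 t t0; rewrite g0 subr0 in h; lra.
have hsE : has_sup E.
  split; first by exists 0; split => //; rewrite g0; exact: ltW.
  by exists (C 0 / m) => t /ubE.
set T := sup E.
have TE : forall t, E t -> t <= T by move=> t Et; exact: sup_upper_bound.
have hT : 0 < T.
  apply: (lt_le_trans (_ : 0 < C 0 / M)); first exact: divr_gt0.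
  apply: TE; split; first exact/ltW/divr_gt0.
  have /andP[h _] := hSB 0 (C 0 / M) (ltW (divr_gt0 hC0 hM)).
  by rewrite g0 subr0 divfK ?gt_eqF // subrr in h.
have gT : g T = 0.
  case: (ltgtP (g T) 0) => // h.
  - have eps0 : 0 < - g T / M by rewrite divr_gt0 // oppr_gt0.
    have [e Ee he] := sup_adherent eps0 hsE.
    have eT := TE _ Ee.
    have /andP[h1 _] := hSB e T eT.
    have hx : (T - e) * M < (- g T / M) * M.
      rewrite ltr_pM2r //; move: he; rewrite -/T; set d := - g T / M; lra.
    rewrite divfK ?gt_eqF // in hx; case: Ee => _; move: h1 hx; set x := (T - e) * M; lra.
  - have d0 : 0 < g T / M by exact: divr_gt0.
    have : E (T + g T / M).
      split; first lra.
      have hle : T <= T + g T / M by rewrite lerDl ltW.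
      have /andP[h1 _] := hSB T (T + g T / M) hle.
      have e1 : (T + g T / M - T) * M = g T by rewrite addrAC subrr add0r divfK ?gt_eqF.
      by rewrite e1 subrr in h1.
    move=> /TE; lra.
exists T^-1; split.
  by split; [rewrite invr_gt0 | rewrite invrK].
move=> y [y0 gy].
have gy' : g y^-1 = 0 := gy.
have : y^-1 = T.
  case: (ltgtP y^-1 T) => // h.
  - by have := strict _ _ h; rewrite gy' gT ltxx.
  - by have := strict _ _ h; rewrite gy' gT ltxx.
by move=> <-; rewrite invrK.
Qed.
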